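(* Consider the $2\times 1$ merge network with parameters $c>0$, $k>1$, $\eta\in(0,\tfrac12)$ and constant downstream queue length $Q\ge 0$: upstream queues $1,2$ have capacities $c_1=c$, $c_2=kc$ and inflows $f_1=\eta c$, $f_2=k\eta c$; the downstream queue has capacity $c_0=(k+1)c$. For weights $\gamma_0,\gamma_1,\gamma_2>0$ and an ordered pair $(u,s)\in\{(1,2),(2,1)\}$ (unsaturated queue $u$, saturated queue $s$) define $$q_{s,act}=\frac{\gamma_0}{\gamma_s}\Big(1-\frac{c_u}{c_s}\Big)Q+\frac{\gamma_u c_u}{\gamma_s c_s}f_u,\qquad \bar q_s=q_{s,act}+f_s-\tfrac12 c_s .$$ Let $\bar q_{s,classical}$ denote $\bar q_s$ for the classical weights $\gamma_0=\gamma_1=\gamma_2=1$, and $\bar q_{s,proposed}$ denote $\bar q_s$ for the proposed weights $\gamma_1=1/c_1$, $\gamma_2=1/c_2$, $\gamma_0=1/c_0$. Then, in regime R1, as $k\to\infty$: (i) for $(u,s)=(1,2)$ (with $Q=Q(k)$ satisfying $Q\ge \frac{k^2-\eta}{k-1}c$ and $Q\ge \frac{k-\eta}{k-1}(k+1)c$, the conditions under which this state exists for both weightings), $\bar q_{s,classical}/\bar q_{s,proposed}\to 1$; (ii) for $(u,s)=(2,1)$ (with $Q$, $c$, $\eta$ fixed), $\bar q_{s,classical}/\bar q_{s,proposed}\sim k$, i.e. $\bar q_{s,classical}/(k\,\bar q_{s,proposed})\to 1$.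
   Context: Model: discrete time $t=0,1,2,\dots$; two upstream queues $q_1(t),q_2(t)\ge 0$ merge into one downstream queue whose length is held constant at $Q$. The priority of upstream queue $i$ is $p_i(t)=(\gamma_i q_i(t)-\gamma_0 Q)c_i$. At each time step exactly one upstream queue is activated, one with maximal priority; the activated queue evolves as $q_i(t+1)=q_i(t)-\min(q_i(t),c_i)+f_i$, the other as $q_j(t+1)=q_j(t)+f_j$. Regime R1 means exactly one upstream queue (denoted $u$) is in the unsaturated regime (its outflow $\min(q_u,c_u)$ is below capacity) while the other (denoted $s$) is saturated (its outflow when activated equals $c_s$). The quantity $\bar q_s$ is the paper's approximation of the average steady-state length of the saturated queue, which measures time spent in the network. The weights $\gamma\equiv 1$ give the classical backpressure algorithm; the weights $\gamma=1/\text{capacity}$ give the proposed re-scaled algorithm. *)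

(* Defs.v *)
From Stdlib Require Import Reals.
From Coquelicot Require Import Coquelicot.
Open Scope R_scope.

(* 2x1 merge network with parameters c, k, eta.
   Queue indices: 0 = downstream, 1 and 2 = upstream. *)

Definition cap (c k : R) (i : nat) : R :=
  match i with
  | O => (k + 1) * c
  | 1%nat => c
  | _ => k * c
  end.

Definition inflow (c k eta : R) (i : nat) : R :=
  match i with
  | O => 0
  | 1%nat => eta * c
  | _ => k * eta * c
  end.

Definition q_act (g : nat -> R) (c k eta Q : R) (u s : nat) : R :=
  g O / g s * (1 - cap c k u / cap c k s) * Q
  + g u * cap c k u / (g s * cap c k s) * inflow c k eta u.

Definition qbar (g : nat -> R) (c k eta Q : R) (u s : nat) : R :=
  q_act g c k eta Q u s + inflow c k eta s - cap c k s / 2.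

Definition gamma_classical : nat -> R := fun _ => 1.

Definition gamma_proposed (c k : R) : nat -> R := fun i => / cap c k i.

(* Main.v *)
Require Import Defs.
From Stdlib Require Import Reals Lra Psatz.
From Coquelicot Require Import Coquelicot.
Open Scope R_scope.

Lemma lim_crit (f : R -> R) (M A : R) :
  0 < A -> (forall k, M < k -> Rabs (f k - 1) <= A / k) -> is_lim f p_infty 1.
Proof.
  intros HA H. apply is_lim_spec. intros eps.
  exists (Rmax (Rmax M 1) (A / eps + 1)). intros k Hk.
  assert (H1 := Rmax_l (Rmax M 1) (A/eps+1)).
  assert (H2 := Rmax_r (Rmax M 1) (A/eps+1)).
  assert (H3 := Rmax_l M 1). assert (H4 := Rmax_r M 1).
  assert (Hk0 : 0 < k) by lra.
  eapply Rle_lt_trans. apply H. lra.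
  destruct eps as [e He]; simpl in *.
  apply Rlt_div_l; [lra|].
  assert (A / e < k) by lra.
  apply Rlt_div_l in H0; [|lra]. lra.
Qed.

Lemma ratio_bound N D k A : 0 < D -> 0 < k -> Rabs (k * (N - D)) <= A * D ->
  Rabs (N / D - 1) <= A / k.
Proof.
  intros HD Hk H.
  replace (N / D - 1) with ((k * (N - D)) / (k * D)) by (field; lra).
  rewrite Rabs_div by nra. rewrite (Rabs_pos_eq (k * D)) by nra.
  replace (A / k) with ((A * D) / (k * D)) by (field; lra).
  apply Rmult_le_compat_r; [|lra].
  apply Rlt_le, Rinv_0_lt_compat; nra.
Qed.

Theorem theorem2 (c eta Q0 : R) (Qk : R -> R) :
  0 < c -> 0 < eta < 1/2 -> 0 <= Q0 ->
  (forall k, 1 < k ->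
     0 <= Qk k /\
     Qk k >= (k ^ 2 - eta) / (k - 1) * c /\
     Qk k >= (k - eta) / (k - 1) * ((k + 1) * c)) ->
  (* (i) (u,s) = (1,2), Q = Q(k) *)
  is_lim (fun k => qbar gamma_classical c k eta (Qk k) 1 2
                   / qbar (gamma_proposed c k) c k eta (Qk k) 1 2)
         p_infty 1
  /\
  (* (ii) (u,s) = (2,1), Q fixed *)
  is_lim (fun k => qbar gamma_classical c k eta Q0 2 1
                   / (k * qbar (gamma_proposed c k) c k eta Q0 2 1))
         p_infty 1.
Proof.
  intros Hc [He1 He2] HQ0 HQk. split.
  - apply (lim_crit _ 1 3); [lra|]. intros k Hk.
    destruct (HQk k Hk) as [HQ [_ HQ2]].
    set (Q := Qk k) in *.
    set (P := (k - 1) / (k + 1) * Q).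
    assert (HP : P >= (k - eta) * c).
    { unfold P. apply Rle_ge.
      replace ((k - eta) * c) with ((k - 1) / (k + 1) * ((k - eta) / (k - 1) * ((k + 1) * c)))
        by (field; lra).
      apply Rmult_le_compat_l; [|lra].
      apply Rlt_le, Rdiv_lt_0_compat; lra. }
    assert (E1 : qbar gamma_classical c k eta Q 1 2
                 = (k + 1) / k * P + eta * c / k + k * eta * c - k * c / 2).
    { unfold qbar, q_act, cap, inflow, gamma_classical; cbv beta iota; unfold P. field. lra. }
    assert (E2 : qbar (gamma_proposed c k) c k eta Q 1 2
                 = P + eta * c + k * eta * c - k * c / 2).
    { unfold qbar, q_act, gamma_proposed, cap, inflow; cbv beta iota; unfold P. field. lra. }
    rewrite E1, E2.
    assert (Hkc : 0 < k * c) by nra.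
    assert (Hkec : 0 < k * eta * c) by (apply Rmult_lt_0_compat; nra).
    assert (Hec : 0 < eta * c) by nra.
    apply ratio_bound; [nra|lra|].
    replace (k * ((k + 1) / k * P + eta * c / k + k * eta * c - k * c / 2 -
        (P + eta * c + k * eta * c - k * c / 2))) with (P + eta * c - k * eta * c)
      by (field; lra).
    apply Rabs_le. split; nra.
  - set (a := eta * c).
    assert (Ha : 0 < a) by (unfold a; nra).
    assert (Hac : a < c / 2) by (unfold a; nra).
    apply (lim_crit _ (2 * (Q0 + c) / a + 1) ((a + c) / a)).
    { apply Rdiv_lt_0_compat; lra. }
    intros k Hk.
    assert (Hk' : 2 * (Q0 + c) / a < k) by lra.
    apply Rlt_div_l in Hk'; [|lra].
    assert (Hk1 : 1 < k).
    { assert (0 < 2 * (Q0 + c) / a) by (apply Rdiv_lt_0_compat; lra). lra. }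
    set (R0 := (k - 1) / (k + 1)).
    assert (HR : 0 <= R0 <= 1).
    { unfold R0. split. apply Rlt_le, Rdiv_lt_0_compat; lra.
      apply Rmult_le_reg_r with (k + 1); [lra|]. unfold Rdiv.
      rewrite Rmult_assoc, Rinv_l by lra. lra. }
    set (S := R0 * Q0).
    assert (HS : 0 <= S <= Q0) by (unfold S; split; nra).
    assert (E1 : qbar gamma_classical c k eta Q0 2 1
                 = (1 - k) * Q0 + k * k * a + a - c / 2).
    { unfold qbar, q_act, cap, inflow, gamma_classical; cbv beta iota; unfold a. field. lra. }
    assert (E2 : k * qbar (gamma_proposed c k) c k eta Q0 2 1
                 = - k * S + k * k * a + k * a - k * c / 2).
    { unfold qbar, q_act, gamma_proposed, cap, inflow; cbv beta iota; unfold a, S, R0. field. lra. }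
    rewrite E1, E2.
    set (D := - k * S + k * k * a + k * a - k * c / 2).
    assert (HD : k * (k * a / 2) <= D).
    { unfold D.
      assert (0 <= k * (k * a / 2 - S + a - c / 2)).
      { apply Rmult_le_pos; lra. }
      nra. }
    assert (HD0 : 0 < k * (k * a / 2)).
    { apply Rmult_lt_0_compat; nra. }
    apply ratio_bound; [lra|lra|].
    replace (k * ((1 - k) * Q0 + k * k * a + a - c / 2 - D))
      with (k * (- S + (k - 1) * (c / 2 - a))).
    2:{ unfold D, S, R0. field. lra. }
    rewrite Rabs_mult, (Rabs_pos_eq k) by lra.
    assert (HZ : Rabs (- S + (k - 1) * (c / 2 - a)) <= k * (a + c) / 2).
    { apply Rabs_le. assert (0 <= (k - 1) * (c / 2 - a)) by (apply Rmult_le_pos; lra).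
      assert ((k - 1) * (c / 2 - a) <= k * c / 2) by nra. split; nra. }
    apply Rle_trans with (k * (k * (a + c) / 2)).
    { apply Rmult_le_compat_l; lra. }
    apply Rle_trans with ((a + c) / a * (k * (k * a / 2))).
    { right. field. lra. }
    apply Rmult_le_compat_l; [|lra].
    apply Rlt_le, Rdiv_lt_0_compat; lra.
Qed.
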